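(* Let $Q$ be a commutative loop possessing a subgroup of index $2$. Then $[Q:N_\mu(Q)]\le 2$ if and only if there exist a commutative group $G$ and a bijection $f$ of $G$ such that $Q$ is isomorphic to $G(f)$.
   Context: A loop is a set with a binary operation and a neutral element $1$ in which all left and right translations are bijections. The middle nucleus of a loop $Q$ is $N_\mu(Q)=\{y\in Q:(xy)z=x(yz)\ \forall x,z\in Q\}$. Construction $G(f)$: for a commutative group $G$ (written multiplicatively) and a bijection $f:G\to G$, let $\overline{G}=\{\overline{x}:x\in G\}$ be a disjoint copy of $G$, and let $G(f)$ be the set $G\cup\overline{G}$ with multiplication $*$ defined for $x,y\in G$ by $x*y=xy$, $x*\overline{y}=\overline{xy}$, $\overline{x}*y=\overline{xy}$, $\overline{x}*\overline{y}=f(xy)$. It is a commutative loop with neutral element $1$. *)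

(* Defs.v *)
Set Implicit Arguments.

Definition bijective_fun {A B : Type} (f : A -> B) : Prop :=
  exists g : B -> A, (forall x, g (f x) = x) /\ (forall y, f (g y) = y).

Definition is_loop {Q : Type} (mul : Q -> Q -> Q) (one : Q) : Prop :=
  (forall x, mul one x = x) /\ (forall x, mul x one = x) /\
  (forall a, bijective_fun (fun x => mul a x)) /\
  (forall a, bijective_fun (fun x => mul x a)).

Definition commutative_op {Q : Type} (mul : Q -> Q -> Q) : Prop :=
  forall x y, mul x y = mul y x.

Definition is_comm_group {G : Type} (mul : G -> G -> G) (one : G) : Prop :=
  (forall x y z, mul (mul x y) z = mul x (mul y z)) /\
  (forall x, mul one x = x) /\ (forall x, mul x one = x) /\
  (forall x, exists y, mul x y = one /\ mul y x = one) /\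
  commutative_op mul.

Definition is_subloop {Q : Type} (mul : Q -> Q -> Q) (one : Q) (H : Q -> Prop)
  : Prop :=
  H one /\ (forall a b, H a -> H b -> H (mul a b)) /\
  (forall a b x, H a -> H b -> mul a x = b -> H x) /\
  (forall a b x, H a -> H b -> mul x a = b -> H x).

Definition is_subgroup {Q : Type} (mul : Q -> Q -> Q) (one : Q) (H : Q -> Prop)
  : Prop :=
  is_subloop mul one H /\
  (forall x y z, H x -> H y -> H z -> mul (mul x y) z = mul x (mul y z)).

Definition coset {Q : Type} (mul : Q -> Q -> Q) (H : Q -> Prop) (x : Q)
  : Q -> Prop := fun y => exists h, H h /\ y = mul x h.

Definition same_set {Q : Type} (A B : Q -> Prop) : Prop :=
  forall y, A y <-> B y.

Definition index_eq2 {Q : Type} (mul : Q -> Q -> Q) (H : Q -> Prop) : Prop :=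
  exists a b, ~ same_set (coset mul H a) (coset mul H b) /\
    forall x, same_set (coset mul H x) (coset mul H a) \/
              same_set (coset mul H x) (coset mul H b).

Definition index_le2 {Q : Type} (mul : Q -> Q -> Q) (H : Q -> Prop) : Prop :=
  exists a b, forall x, same_set (coset mul H x) (coset mul H a) \/
                        same_set (coset mul H x) (coset mul H b).

Definition middle_nucleus {Q : Type} (mul : Q -> Q -> Q) : Q -> Prop :=
  fun y => forall x z, mul (mul x y) z = mul x (mul y z).

(* The construction G(f): carrier G + G, inl x = x, inr x = overline x. *)
Definition Gf_mul {G : Type} (mul : G -> G -> G) (f : G -> G)
  (u v : G + G) : G + G :=
  match u, v with
  | inl x, inl y => inl (mul x y)
  | inl x, inr y => inr (mul x y)
  | inr x, inl y => inr (mul x y)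
  | inr x, inr y => inl (f (mul x y))
  end.

Definition loop_iso {A B : Type} (mulA : A -> A -> A) (mulB : B -> B -> B)
  (phi : A -> B) : Prop :=
  bijective_fun phi /\ forall a b, phi (mulA a b) = mulB (phi a) (phi b).

(* Main.v *)
Require Import Defs.
From Stdlib Require Import Setoid Classical ClassicalEpsilon ProofIrrelevance Bool.

Lemma loop_lcancel Q (mul : Q -> Q -> Q) one (HQ : is_loop mul one) a x y :
  mul a x = mul a y -> x = y.
Proof.
  destruct HQ as [_ [_ [HL _]]]. destruct (HL a) as [g [Hg _]]. intro E.
  pose proof (Hg x) as H1. pose proof (Hg y) as H2. cbv beta in H1, H2.
  rewrite <- H1, <- H2, E. reflexivity.
Qed.

Arguments loop_lcancel {Q mul one} HQ a x y.
Lemma loop_ldiv Q (mul : Q -> Q -> Q) one (HQ : is_loop mul one) a b :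
  exists x, mul a x = b.
Proof.
  destruct HQ as [_ [_ [HL _]]]. destruct (HL a) as [g [_ Hg]].
  exists (g b). exact (Hg b).
Qed.

Arguments loop_ldiv {Q mul one} HQ a b.
Lemma inj_surj_bij {A B : Type} (f : A -> B) :
  (forall x y, f x = f y -> x = y) -> (forall y, exists x, f x = y) ->
  bijective_fun f.
Proof.
  intros Hi Hs.
  exists (fun y => proj1_sig (constructive_indefinite_description _ (Hs y))).
  split.
  - intro x. destruct (constructive_indefinite_description _ (Hs (f x))) as [z Hz].
    simpl. apply Hi. exact Hz.
  - intro y. destruct (constructive_indefinite_description _ (Hs y)) as [z Hz].
    simpl. exact Hz.
Qed.

Lemma sig_eq {Q : Type} (P : Q -> Prop) (x y : {q | P q}) :
  proj1_sig x = proj1_sig y -> x = y.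
Proof.
  destruct x as [x px], y as [y py]; simpl; intro E; subst.
  f_equal; apply proof_irrelevance.
Qed.

Lemma lemmaA Q (mul : Q -> Q -> Q) one (HQ : is_loop mul one) (P : Q -> Prop)
  (P1 : P one) d (Pd : ~ P d) (Hi : index_le2 mul P) :
  forall q, ~ P q -> exists g, P g /\ q = mul d g.
Proof.
  destruct HQ as [Hl1 [Hr1 _]].
  assert (C1 : forall y, coset mul P one y <-> P y).
  { intro y; split.
    - intros [h [Ph E]]. rewrite Hl1 in E. subst; exact Ph.
    - intro Py. exists y. split; auto. }
  assert (Cs : forall q, coset mul P q q).
  { intro q. exists one. split; auto. }
  assert (nq : forall q, ~ P q -> ~ same_set (coset mul P q) (coset mul P one)).
  { intros q Hq S. apply Hq. apply C1. apply S. apply Cs. }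
  intros q Hq.
  destruct Hi as [a [b Hab]].
  assert (Hdq : coset mul P d q).
  { destruct (Hab one) as [E1|E1]; destruct (Hab q) as [Eq|Eq];
      destruct (Hab d) as [Ed|Ed];
      first
      [ apply Ed, Eq, Cs
      | exfalso; apply (nq q Hq); intro y; specialize (Eq y); specialize (E1 y); tauto
      | exfalso; apply (nq d Pd); intro y; specialize (Ed y); specialize (E1 y); tauto ]. }
  destruct Hdq as [g [Pg E]]. exists g. auto.
Qed.

Arguments lemmaA {Q mul one} HQ P P1 d Pd Hi.
Lemma constructB Q (mul : Q -> Q -> Q) one (HQ : is_loop mul one)
  (Hcomm : commutative_op mul)
  (P : Q -> Prop) (P1 : P one) (Pmul : forall x y, P x -> P y -> P (mul x y))
  (Pinv : forall x, P x -> exists y, P y /\ mul x y = one)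
  (PN : forall x, P x -> middle_nucleus mul x)
  (c : Q) (Pc : ~ P c) (Pdec : forall q, ~ P q -> exists g, P g /\ q = mul c g) :
  exists (G : Type) (gmul : G -> G -> G) (g1 : G) (f : G -> G),
    is_comm_group gmul g1 /\ bijective_fun f /\
    exists phi : Q -> G + G, loop_iso mul (Gf_mul gmul f) phi.
Proof.
  pose proof HQ as [Hl1 [Hr1 _]].
  assert (Rdiv : forall x z, P x -> P (mul z x) -> P z).
  { intros x z Px Pzx. destruct (Pinv x Px) as [x' [Px' E]].
    assert (E2 : mul (mul z x) x' = z) by (rewrite (PN x Px), E, Hr1; reflexivity).
    rewrite <- E2. apply Pmul; auto. }
  assert (Hcc : forall x, P x -> P (mul c (mul c x))).
  { intros x Px. apply NNPP. intro Hn. destruct (Pdec _ Hn) as [h [Ph E]].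
    apply (loop_lcancel HQ _ _ _) in E. apply Pc. apply (Rdiv x c Px). rewrite E; exact Ph. }
  assert (K : forall x y, P x -> P y -> mul x (mul c y) = mul c (mul x y)).
  { intros x y Px Py. rewrite Hcomm, (PN y Py), (Hcomm y x). reflexivity. }
  set (G := {q | P q}).
  set (gmul := fun x y : G => exist P (mul (proj1_sig x) (proj1_sig y))
                 (Pmul _ _ (proj2_sig x) (proj2_sig y))).
  set (g1 := exist P one P1 : G).
  set (f := fun t : G => exist P (mul c (mul c (proj1_sig t))) (Hcc _ (proj2_sig t)) : G).
  exists G, gmul, g1, f.
  split; [|split].
  - unfold is_comm_group. split; [|split; [|split; [|split]]].
    + intros [x px] [y py] [z pz]. apply sig_eq. simpl. apply (PN y py).
    + intros [x px]. apply sig_eq. simpl. apply Hl1.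
    + intros [x px]. apply sig_eq. simpl. apply Hr1.
    + intros [x px]. destruct (Pinv x px) as [y [py E]].
      exists (exist P y py). split; apply sig_eq; simpl; auto.
      rewrite Hcomm; exact E.
    + intros [x px] [y py]. apply sig_eq. simpl. apply Hcomm.
  - apply inj_surj_bij.
    + intros [x px] [y py] E. apply sig_eq. simpl.
      apply (f_equal (@proj1_sig _ _)) in E. simpl in E.
      apply (loop_lcancel HQ _ _ _) in E. apply (loop_lcancel HQ _ _ _) in E. exact E.
    + intros [s ps]. destruct (loop_ldiv HQ c s) as [u Hu].
      assert (nu : ~ P u).
      { intro Pu. apply Pc. apply (Rdiv u c Pu). rewrite Hu; exact ps. }
      destruct (Pdec u nu) as [t [pt Et]].
      exists (exist P t pt). apply sig_eq. simpl. rewrite <- Et. exact Hu.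
  - set (psi := fun u : G + G => match u with
                 | inl g => proj1_sig g | inr g => mul c (proj1_sig g) end).
    assert (psi_inj : forall u v, psi u = psi v -> u = v).
    { intros [[x px]|[x px]] [[y py]|[y py]]; simpl; intro E.
      - f_equal. apply sig_eq. exact E.
      - exfalso. apply Pc. apply (Rdiv y c py). rewrite <- E. exact px.
      - exfalso. apply Pc. apply (Rdiv x c px). rewrite E. exact py.
      - f_equal. apply sig_eq. simpl. exact (loop_lcancel HQ _ _ _ E). }
    assert (psi_surj : forall q, exists u, psi u = q).
    { intro q. destruct (classic (P q)) as [pq|nq].
      - exists (inl (exist P q pq)). reflexivity.
      - destruct (Pdec q nq) as [g [pg E]]. exists (inr (exist P g pg)).
        simpl. symmetry; exact E. }
    assert (psi_hom : forall u v, psi (Gf_mul gmul f u v) = mul (psi u) (psi v)).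
    { intros [[x px]|[x px]] [[y py]|[y py]]; simpl.
      - reflexivity.
      - symmetry. apply K; auto.
      - symmetry. apply (PN x px).
      - pose proof (PN x px c (mul c y)) as E; cbv beta in E. rewrite E, (K x y px py); reflexivity. }
    destruct (inj_surj_bij psi psi_inj psi_surj) as [phi [H1 H2]].
    exists phi. split.
    + exists psi. split; auto.
    + intros a b. apply psi_inj. rewrite psi_hom, !H2. reflexivity.
Qed.

Arguments constructB {Q mul one} HQ Hcomm P P1 Pmul Pinv PN c Pc Pdec.
Definition side {G : Type} (u : G + G) : bool :=
  match u with inl _ => false | inr _ => true end.

Lemma side_mul {G : Type} (gmul : G -> G -> G) f u v :
  side (Gf_mul gmul f u v) = xorb (side u) (side v).
Proof. destruct u, v; reflexivity. Qed.

Lemma Minl {G : Type} (gmul : G -> G -> G) g1 f (Hg : is_comm_group gmul g1) y :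
  middle_nucleus (Gf_mul gmul f) (inl y).
Proof.
  destruct Hg as [Ha _].
  intros [x|x] [z|z]; simpl; rewrite Ha; reflexivity.
Qed.

Lemma Mall {G : Type} (gmul : G -> G -> G) g1 f (Hg : is_comm_group gmul g1) y0 :
  middle_nucleus (Gf_mul gmul f) (inr y0) ->
  forall u, middle_nucleus (Gf_mul gmul f) u.
Proof.
  intro M0. pose proof Hg as [Ha [Hl [Hr [Hinv Hc]]]].
  assert (F : forall x s, f (gmul x s) = gmul x (f s)).
  { intros x s. destruct (Hinv y0) as [yi [E1 _]].
    pose proof (M0 (inl x) (inr (gmul yi s))) as E. simpl in E.
    injection E as E.
    assert (E2 : gmul y0 (gmul yi s) = s) by (rewrite <- Ha, E1, Hl; reflexivity).
    rewrite E2, Ha, E2 in E. exact E. }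
  intros [y|y]. { apply (@Minl _ gmul g1 f Hg). }
  intros [x|x] [z|z]; simpl.
  - rewrite Ha; reflexivity.
  - rewrite Ha, F; reflexivity.
  - f_equal. rewrite <- Ha, (Hc (gmul x y) z), (F z). apply Hc.
  - f_equal. rewrite <- F, (Hc _ z), <- F. f_equal.
    rewrite Hc, Ha. reflexivity.
Qed.

Theorem corollary2p3 (Q : Type) (mul : Q -> Q -> Q) (one : Q)
  (HQ : is_loop mul one) (Hcomm : commutative_op mul)
  (Hsub : exists H : Q -> Prop, is_subgroup mul one H /\ index_eq2 mul H) :
  index_le2 mul (middle_nucleus mul) <->
  exists (G : Type) (gmul : G -> G -> G) (g1 : G) (f : G -> G),
    is_comm_group gmul g1 /\ bijective_fun f /\
    exists phi : Q -> G + G, loop_iso mul (Gf_mul gmul f) phi.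
Proof.
  pose proof HQ as [Hl1 [Hr1 _]].
  split.
  - intro Hi.
    destruct (classic (forall q, middle_nucleus mul q)) as [Hall|Hnall].
    + destruct Hsub as [H [[[H1 [Hm [Hld Hrd]]] _] Hi2]].
      assert (Hd : exists d, ~ H d).
      { apply NNPP. intro Hn.
        assert (Ha : forall d, H d) by (intro d; apply NNPP; intro; apply Hn; eauto).
        destruct Hi2 as [a [b [Hne _]]]. apply Hne. intro y. split; intros _.
        - destruct (loop_ldiv HQ b y) as [h Eh]. exists h; auto.
        - destruct (loop_ldiv HQ a y) as [h Eh]. exists h; auto. }
      destruct Hd as [d Hd].
      assert (Hi2' : index_le2 mul H).
      { destruct Hi2 as [a [b [_ Hab]]]. exists a, b. exact Hab. }
      apply (constructB HQ Hcomm H H1 Hm) with (c := d); auto.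
      * intros x Hx. destruct (loop_ldiv HQ x one) as [y Ey].
        exists y; split; auto. apply (Hld x one y); auto.
      * apply (lemmaA HQ H H1 d Hd Hi2').
    + apply not_all_ex_not in Hnall. destruct Hnall as [d Hd].
      assert (N1 : middle_nucleus mul one).
      { intros x z. rewrite Hr1, Hl1. reflexivity. }
      assert (Nm : forall a b, middle_nucleus mul a -> middle_nucleus mul b ->
                    middle_nucleus mul (mul a b)).
      { intros a b Na Nb x z. rewrite <- Na, Nb, Na, Nb. reflexivity. }
      assert (Ninv : forall a, middle_nucleus mul a ->
                exists y, middle_nucleus mul y /\ mul a y = one).
      { intros a Na. destruct (loop_ldiv HQ a one) as [a' Ea].
        exists a'. split; auto.
        assert (Rinv : forall x, mul (mul x a') a = x).
        { intro x. destruct (loop_ldiv HQ a x) as [y Ey].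
          rewrite <- Ey, (Hcomm a y), Na, Ea, Hr1. reflexivity. }
        intros x z.
        assert (Az : mul a (mul a' z) = z).
        { rewrite Hcomm, (Hcomm a' z), Rinv. reflexivity. }
        rewrite <- (Rinv x) at 2. rewrite Na, Az. reflexivity. }
      apply (constructB HQ Hcomm (middle_nucleus mul) N1 Nm Ninv) with (c := d); auto.
      apply (lemmaA HQ _ N1 d Hd Hi).
  - intros [G [gmul [g1 [f [Hg [Hf [phi [[psi [Hpsi Hphi]] Hhom]]]]]]]].
    assert (T1 : forall q, middle_nucleus mul q -> middle_nucleus (Gf_mul gmul f) (phi q)).
    { intros q Nq u w. rewrite <- (Hphi u), <- (Hphi w), <- !Hhom, Nq. reflexivity. }
    assert (T2 : forall q, middle_nucleus (Gf_mul gmul f) (phi q) -> middle_nucleus mul q).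
    { intros q Mq x z. rewrite <- (Hpsi (mul (mul x q) z)), <- (Hpsi (mul x (mul q z))).
      f_equal. rewrite !Hhom. apply Mq. }
    destruct (classic (exists q, middle_nucleus mul q /\ side (phi q) = true))
      as [[q0 [Nq0 Sq0]]|HB].
    + assert (Nall : forall q, middle_nucleus mul q).
      { destruct (phi q0) as [y0|y0] eqn:Eq0; [discriminate|].
        pose proof (T1 q0 Nq0) as M0. rewrite Eq0 in M0.
        intro q. apply T2. apply (@Mall _ gmul g1 f Hg y0 M0). }
      exists one, one. intro x. left. intro y. split; intros _.
      * destruct (loop_ldiv HQ one y) as [h Eh]. exists h; auto.
      * destruct (loop_ldiv HQ x y) as [h Eh]. exists h; auto.
    + assert (B : forall q, middle_nucleus mul q -> side (phi q) = false).
      { intros q Nq. destruct (side (phi q)) eqn:E; auto. exfalso; apply HB; eauto. }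
      assert (B2 : forall q, side (phi q) = false -> middle_nucleus mul q).
      { intros q Sq. apply T2. destruct (phi q) as [y|y]; [|discriminate].
        apply (@Minl _ gmul g1 f Hg). }
      assert (Cc : forall x y, coset mul (middle_nucleus mul) x y <->
                               side (phi y) = side (phi x)).
      { intros x y. split.
        - intros [h [Nh ->]]. rewrite Hhom, side_mul, (B h Nh), xorb_false_r. reflexivity.
        - intro S. destruct (loop_ldiv HQ x y) as [h Eh]. exists h. split; auto.
          apply B2. rewrite <- Eh, Hhom, side_mul in S.
          destruct (side (phi x)), (side (phi h)); simpl in S; auto; discriminate. }
      assert (S1 : side (phi one) = false).
      { assert (E : side (phi one) = xorb (side (phi one)) (side (phi one))).
        { rewrite <- (side_mul gmul f), <- Hhom, Hl1. reflexivity. }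
        rewrite xorb_nilpotent in E. exact E. }
      assert (S2 : side (phi (psi (inr g1))) = true) by (rewrite Hphi; reflexivity).
      exists one, (psi (inr g1)). intro x.
      destruct (side (phi x)) eqn:Sx; [right|left]; intro y; rewrite !Cc;
        rewrite Sx; [rewrite S2 | rewrite S1]; tauto.
Qed.
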